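(* It is undecidable whether, for an arbitrary ranked alphabet $\Sigma$, computable strong bimonoid $B$, and bottom-up deterministic $(\Sigma,B)$-wta $\mathcal{A}$, the Nerode $(\Sigma,B)$-algebra $\mathcal{N}(\mathcal{A})$ is finite.
   Context: Ranked alphabet $\Sigma$ ($\Sigma^{(0)}\ne\emptyset$), trees $T_\Sigma$. Strong bimonoid $(B,\oplus,\otimes,\mathbb{0},\mathbb{1})$: commutative monoid $(B,\oplus,\mathbb{0})$, monoid $(B,\otimes,\mathbb{1})$, $\mathbb{0}\ne\mathbb{1}$, $\mathbb{0}$ absorbing; computable if $B$ is recursive and $\oplus,\otimes$ are computable. $(\Sigma,B)$-wta $\mathcal{A}=(Q,\delta,F)$: $Q$ finite nonempty, $\delta_k:Q^k\times\Sigma^{(k)}\times Q\to B$, $F:Q\to B$; bottom-up deterministic if for all $k,\sigma,q_1,\dots,q_k$ at most one $q$ has $\delta_k(q_1\dots q_k,\sigma,q)\ne\mathbb{0}$. Vector algebra $\mathrm{V}(\mathcal{A})=(B^Q,\delta_{\mathcal{A}})$, $\delta_{\mathcal{A}}(\sigma)(v_1,\dots,v_k)_q=\bigoplus_{q_1,\dots,q_k}\big(\bigotimes_{i=1}^k(v_i)_{q_i}\big)\otimes\delta_k(q_1\dots q_k,\sigma,q)$. The Nerode algebra $\mathcal{N}(\mathcal{A})=(Q_{\mathcal{N}},\theta_{\mathcal{N}},F_{\mathcal{N}})$ has carrier $Q_{\mathcal{N}}$ the smallest subset of $B^Q$ closed under all $\delta_{\mathcal{A}}(\sigma)$ (equivalently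 the image of the unique homomorphism $T_\Sigma\to\mathrm{V}(\mathcal{A})$), restricted operations, and $(F_{\mathcal{N}})_v=\bigoplus_q v_q\otimes F_q$; it is finite if $Q_{\mathcal{N}}$ is finite. *)

(* Defs.v *)
From HB Require Import structures.
From mathcomp Require Import all_boot.
Set Implicit Arguments. Unset Strict Implicit. Unset Printing Implicit Defensive.

(* Cantor pairing and its inverse (enumeration of the diagonals). *)
Definition cpair (x y : nat) : nat := ((x + y) * (x + y).+1)./2 + y.
Definition unpair_step (p : nat * nat) : nat * nat :=
  if p.1 is x.+1 then (x, p.2.+1) else (p.2.+1, 0).
Definition unpair (n : nat) : nat * nat := iter n unpair_step (0, 0).

Inductive prog : Type :=
| PZero
| PSucc
| PId
| PFst
| PSnd
| PComp of prog & prog       (* PComp f g = f o g *)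
| PPair of prog & prog
| PRec of prog & prog
| PMu of prog.

Inductive evalR : prog -> nat -> nat -> Prop :=
| ev_zero x : evalR PZero x 0
| ev_succ x : evalR PSucc x x.+1
| ev_id x : evalR PId x x
| ev_fst x : evalR PFst x (unpair x).1
| ev_snd x : evalR PSnd x (unpair x).2
| ev_comp f g x y z : evalR g x y -> evalR f y z -> evalR (PComp f g) x z
| ev_pair f g x a b : evalR f x a -> evalR g x b -> evalR (PPair f g) x (cpair a b)
| ev_rec0 f g n x y : unpair n = (0, x) -> evalR f x y -> evalR (PRec f g) n y
| ev_recS f g n m x y z : unpair n = (m.+1, x) ->
    evalR (PRec f g) (cpair m x) y -> evalR g (cpair m (cpair y x)) z ->
    evalR (PRec f g) n z
| ev_mu f x n : evalR f (cpair n x) 0 ->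
    (forall i, i < n -> exists y, evalR f (cpair i x) y.+1) ->
    evalR (PMu f) x n.

Fixpoint prog_to_tree (p : prog) : GenTree.tree nat :=
  match p with
  | PZero => GenTree.Node 0 [::]
  | PSucc => GenTree.Node 1 [::]
  | PId => GenTree.Node 2 [::]
  | PFst => GenTree.Node 3 [::]
  | PSnd => GenTree.Node 4 [::]
  | PComp f g => GenTree.Node 5 [:: prog_to_tree f; prog_to_tree g]
  | PPair f g => GenTree.Node 6 [:: prog_to_tree f; prog_to_tree g]
  | PRec f g => GenTree.Node 7 [:: prog_to_tree f; prog_to_tree g]
  | PMu f => GenTree.Node 8 [:: prog_to_tree f]
  end.

Fixpoint tree_to_prog (t : GenTree.tree nat) : option prog :=
  match t with
  | GenTree.Node 0 [::] => Some PZero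
  | GenTree.Node 1 [::] => Some PSucc
  | GenTree.Node 2 [::] => Some PId
  | GenTree.Node 3 [::] => Some PFst
  | GenTree.Node 4 [::] => Some PSnd
  | GenTree.Node 5 [:: a; b] =>
      if (tree_to_prog a, tree_to_prog b) is (Some f, Some g)
      then Some (PComp f g) else None
  | GenTree.Node 6 [:: a; b] =>
      if (tree_to_prog a, tree_to_prog b) is (Some f, Some g)
      then Some (PPair f g) else None
  | GenTree.Node 7 [:: a; b] =>
      if (tree_to_prog a, tree_to_prog b) is (Some f, Some g)
      then Some (PRec f g) else None
  | GenTree.Node 8 [:: a] =>
      if tree_to_prog a is Some f then Some (PMu f) else None
  | _ => None
  end.

Lemma prog_treeK : pcancel prog_to_tree tree_to_prog.
Proof. by elim=> //= f -> // g ->. Qed.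

HB.instance Definition _ := Countable.copy prog (pcan_type prog_treeK).

(*  - ranked alphabet: symbols 0 .. size ranks - 1, symbol s has rank       *)
(*    nth 0 ranks s;                                                        *)
(*  - computable strong bimonoid: carrier B a subset of nat decided by      *)
(*    memP; oplus, otimes computed by addP, mulP on cpair x y; constants    *)
(*    zeroB, oneB;                                                          *)
(*  - wta: states 0 .. nQ - 1; transition weights listed in trans as        *)
(*    entries (q1..qk, sigma, q, weight), unlisted weights are zeroB;       *)
(*    final weights finw.                                                   *)

Record instance := Inst {
  ranks : seq nat;
  memP : prog; addP : prog; mulP : prog;
  zeroB : nat; oneB : nat;
  nQ : nat;
  trans : seq (seq nat * nat * nat * nat);
  finw : seq nat }.

Definition inst_to (I : instance) :=
  (ranks I, memP I, addP I, mulP I, zeroB I, oneB I, nQ I, trans I, finw I).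
Definition inst_of x :=
  let: (r, a, b, c, d, e, f, g, h) := x in Inst r a b c d e f g h.
Lemma instK : cancel inst_to inst_of. Proof. by case. Qed.
HB.instance Definition _ := Countable.copy instance (can_type instK).

Section Semantics.
Variables (I : instance) (add mul : nat -> nat -> nat).

Definition rank (s : nat) : nat := nth 0 (ranks I) s.

Definition delta (qs : seq nat) (s q : nat) : nat :=
  if [seq e.2 | e <- trans I & e.1 == (qs, s, q)] is w :: _ then w else zeroB I.

Fixpoint state_tuples (k : nat) : seq (seq nat) :=
  if k is k'.+1 then [seq q :: t | q <- iota 0 (nQ I), t <- state_tuples k']
  else [:: [::]].

(* vectors in B^Q are sequences of length nQ; the operation delta_A(s) *)
Definition deltaA (s : nat) (vs : seq (seq nat)) : seq nat :=
  [seq foldr add (zeroB I)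
       [seq mul (foldr mul (oneB I)
                  [seq nth (zeroB I) vq.1 vq.2 | vq <- zip vs qs])
                (delta qs s q)
       | qs <- state_tuples (size vs)]
  | q <- iota 0 (nQ I)].

Inductive nerode_carrier : seq nat -> Prop :=
| NC_step s vs : s < size (ranks I) -> size vs = rank s ->
    (forall v, v \in vs -> nerode_carrier v) -> nerode_carrier (deltaA s vs).

Definition nerode_finite : Prop :=
  exists l : seq (seq nat), forall v, nerode_carrier v -> v \in l.

End Semantics.

(* chi : characteristic function of B, add/mul : oplus/otimes, all three
   computed by the programs of the instance. *)
Definition valid_instance (I : instance) (chi : nat -> bool)
  (add mul : nat -> nat -> nat) : Prop :=
  let inB x := chi x in
  (* ranked alphabet with Sigma^(0) nonempty *)
  0 \in ranks I /\
  (* computable strong bimonoid (B = {n | chi n}) *)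
  (forall n, evalR (memP I) n (chi n)) /\
  (forall x y, inB x -> inB y ->
     evalR (addP I) (cpair x y) (add x y) /\ inB (add x y)) /\
  (forall x y, inB x -> inB y ->
     evalR (mulP I) (cpair x y) (mul x y) /\ inB (mul x y)) /\
  inB (zeroB I) /\ inB (oneB I) /\ zeroB I <> oneB I /\
  (forall x y z, inB x -> inB y -> inB z ->
     add x (add y z) = add (add x y) z) /\
  (forall x y, inB x -> inB y -> add x y = add y x) /\
  (forall x, inB x -> add x (zeroB I) = x) /\
  (forall x y z, inB x -> inB y -> inB z ->
     mul x (mul y z) = mul (mul x y) z) /\
  (forall x, inB x -> mul (oneB I) x = x /\ mul x (oneB I) = x) /\
  (forall x, inB x -> mul (zeroB I) x = zeroB I /\ mul x (zeroB I) = zeroB I) /\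
  0 < nQ I /\
  (forall qs s q w, (qs, s, q, w) \in trans I ->
     [/\ s < size (ranks I), size qs = rank I s,
         all (fun p => p < nQ I) qs, q < nQ I & inB w]) /\
  size (finw I) = nQ I /\ all inB (finw I) /\
  (forall qs s q q', q < nQ I -> q' < nQ I ->
     delta I qs s q <> zeroB I -> delta I qs s q' <> zeroB I -> q = q').

(* Main.v *)
Require Import Defs.
From HB Require Import structures.
From mathcomp Require Import all_boot.
From mathcomp Require Import zify.
From Stdlib Require Classical_Prop.
Set Implicit Arguments. Unset Strict Implicit. Unset Printing Implicit Defensive.

Definition tri s := (s * s.+1)./2.
Lemma triS s : tri s.+1 = tri s + s.+1.
Proof.
rewrite /tri.
have -> : s.+1 * s.+2 = s * s.+1 + s.+1.*2 by rewrite -muln2; lia.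
by rewrite halfD odd_double andbF doubleK.
Qed.

Lemma cpairE x y : cpair x y = tri (x + y) + y.
Proof. by []. Qed.

Lemma cpairS0 x : cpair x.+1 0 = (cpair 0 x).+1.
Proof. by rewrite !cpairE addn0 add0n addn0 triS addnS. Qed.
Lemma cpair_shift x y : cpair x y.+1 = (cpair x.+1 y).+1.
Proof. by rewrite !cpairE addnS addSn addnS. Qed.

Lemma unpair_cpair_gen n : forall x y, cpair x y = n -> unpair n = (x, y).
Proof.
elim: n => [|n IH] x y.
  case: y => [|y]; last by rewrite cpair_shift.
  by case: x => [|x] //; rewrite cpairS0.
move=> H; rewrite /unpair iterS -/(unpair n).
case: y H => [|y] H.
  case: x H => [|x] H; first by [].
  rewrite cpairS0 in H; case: H => H.
  by rewrite (IH 0 x H).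
rewrite cpair_shift in H; case: H => H.
by rewrite (IH x.+1 y H).
Qed.

Lemma unpairK n : cpair (unpair n).1 (unpair n).2 = n.
Proof.
elim: n => [|n IH] //; rewrite /unpair iterS -/(unpair n).
case: (unpair n) IH => [[|a] b] /= <-; [exact: cpairS0 | exact: cpair_shift].
Qed.

Lemma cpairK x y : unpair (cpair x y) = (x, y).
Proof. exact: unpair_cpair_gen. Qed.
Lemma cpairK1 x y : (unpair (cpair x y)).1 = x.
Proof. by rewrite cpairK. Qed.
Lemma cpairK2 x y : (unpair (cpair x y)).2 = y.
Proof. by rewrite cpairK. Qed.

Section EvInd.
Variable P : prog -> nat -> nat -> Prop.
Hypothesis Hzero : forall x, P PZero x 0.
Hypothesis Hsucc : forall x, P PSucc x x.+1.
Hypothesis Hid : forall x, P PId x x.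
Hypothesis Hfst : forall x, P PFst x (unpair x).1.
Hypothesis Hsnd : forall x, P PSnd x (unpair x).2.
Hypothesis Hcomp : forall f g x y z, evalR g x y -> P g x y -> evalR f y z -> P f y z ->
  P (PComp f g) x z.
Hypothesis Hpair : forall f g x a b, evalR f x a -> P f x a -> evalR g x b -> P g x b ->
  P (PPair f g) x (cpair a b).
Hypothesis Hrec0 : forall f g n x y, unpair n = (0, x) -> evalR f x y -> P f x y ->
  P (PRec f g) n y.
Hypothesis HrecS : forall f g n m x y z, unpair n = (m.+1, x) ->
    evalR (PRec f g) (cpair m x) y -> P (PRec f g) (cpair m x) y ->
    evalR g (cpair m (cpair y x)) z -> P g (cpair m (cpair y x)) z ->
    P (PRec f g) n z.
Hypothesis Hmu : forall f x n, evalR f (cpair n x) 0 -> P f (cpair n x) 0 ->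
    (forall i, i < n -> exists y, evalR f (cpair i x) y.+1 /\ P f (cpair i x) y.+1) ->
    P (PMu f) x n.

Fixpoint evind p x y (H : evalR p x y) {struct H} : P p x y :=
  match H in evalR p x y return P p x y with
  | ev_zero x => Hzero x
  | ev_succ x => Hsucc x
  | ev_id x => Hid x
  | ev_fst x => Hfst x
  | ev_snd x => Hsnd x
  | ev_comp f g x y z H1 H2 => Hcomp H1 (evind H1) H2 (evind H2)
  | ev_pair f g x a b H1 H2 => Hpair H1 (evind H1) H2 (evind H2)
  | ev_rec0 f g n x y E H1 => Hrec0 g E H1 (evind H1)
  | ev_recS f g n m x y z E H1 H2 => HrecS E H1 (evind H1) H2 (evind H2)
  | ev_mu f x n H0 Hlt => Hmu H0 (evind H0)
      (fun i hi => match Hlt i hi with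
                   | ex_intro y Hy => ex_intro _ y (conj Hy (evind Hy)) end)
  end.
End EvInd.

Fixpoint recl (F G : nat -> option nat) (m x : nat) : option nat :=
  if m is k.+1 then (if recl F G k x is Some y then G (cpair k (cpair y x)) else None)
  else F x.

Fixpoint muloop (F : nat -> option nat) (k : nat) : nat :=
  if k is k'.+1 then
    (if muloop F k' is 0 then
       (match F k' with None => 1 | Some 0 => k'.+2 | Some _ => 0 end)
     else muloop F k')
  else 0.

Definition mures a := if a is a'.+2 then Some a' else None.

Fixpoint bev (n : nat) (p : prog) (x : nat) {struct p} : option nat :=
  match p with
  | PZero => Some 0
  | PSucc => Some x.+1
  | PId => Some x
  | PFst => Some (unpair x).1
  | PSnd => Some (unpair x).2
  | PComp f g => if bev n g x is Some y then bev n f y else None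
  | PPair f g => if bev n f x is Some a then
                   (if bev n g x is Some b then Some (cpair a b) else None) else None
  | PRec f g => recl (bev n f) (bev n g) (unpair x).1 (unpair x).2
  | PMu f => mures (muloop (fun i => bev n f (cpair i x)) n)
  end.

Lemma muloop_inv F k :
  (muloop F k = 0 -> forall i, i < k -> exists y, F i = Some y.+1) /\
  (forall j, muloop F k = j.+2 -> F j = Some 0 /\ forall i, i < j -> exists y, F i = Some y.+1).
Proof.
elim: k => [|k [IH0 IH2]] /=; first by split=> // i.
case E: (muloop F k) => [|[|a]].
- case EF: (F k) => [[|y]|]; split=> //.
  + move=> j [<-]; split=> //; exact: IH0 E.
  + move=> _ i; rewrite ltnS leq_eqVlt => /orP [/eqP -> | /(IH0 E) //]; by exists y.
- by [].
- split=> // j Ej; apply: IH2; by rewrite E Ej.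
Qed.

Lemma muloop_stable F k j : muloop F k <> 0 -> muloop F (k + j) = muloop F k.
Proof.
move=> H; elim: j => [|j IH]; first by rewrite addn0.
rewrite addnS /= IH; by case: (muloop F k) H.
Qed.

Lemma muloop_zero F k : (forall i, i < k -> exists y, F i = Some y.+1) -> muloop F k = 0.
Proof.
elim: k => [|k IH] H //=.
rewrite IH; last by move=> i hi; apply: H; exact: ltnW.
by case: (H k (ltnSn k)) => y ->.
Qed.

Lemma bev_sound n p : forall x y, bev n p x = Some y -> evalR p x y.
Proof.
elim: p => [||||| f IHf g IHg | f IHf g IHg | f IHf g IHg | f IHf] x y /=.
- by case=> <-; constructor.
- by case=> <-; constructor.
- by case=> <-; constructor.
- by case=> <-; constructor.
- by case=> <-; constructor.
- case E: (bev n g x) => [y'|] // H; apply: ev_comp (IHg _ _ E) (IHf _ _ H).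
- case E1: (bev n f x) => [a|] //; case E2: (bev n g x) => [b|] // [<-].
  exact: ev_pair (IHf _ _ E1) (IHg _ _ E2).
- have : unpair x = ((unpair x).1, (unpair x).2) by case: (unpair x).
  move: ((unpair x).1) ((unpair x).2) => m x'.
  elim: m x y x' => [|m IHm] x y x' Ex /=.
  + by move=> H; apply: ev_rec0 Ex (IHf _ _ H).
  + case E: (recl _ _ m x') => [y0|] // H.
    apply: ev_recS Ex (IHm _ _ _ (cpairK m x') E) (IHg _ _ H).
- rewrite /mures; case E: (muloop _ _) => [|[|a]] // [<-].
  have [_ H2] := muloop_inv (fun i => bev n f (cpair i x)) n.
  have [H0 Hlt] := H2 _ E.
  apply: ev_mu; first exact: IHf _ _ H0.
  move=> i hi; have [y' Hy'] := Hlt i hi; exists y'; exact: IHf _ _ Hy'.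
Qed.

Definition evbig p x y := exists N, forall n, N <= n -> bev n p x = Some y.

Lemma bev_complete p x y : evalR p x y -> evbig p x y.
Proof.
apply: (@evind evbig) => {p x y}.
- by move=> x; exists 0.
- by move=> x; exists 0.
- by move=> x; exists 0.
- by move=> x; exists 0.
- by move=> x; exists 0.
- move=> f g x y z _ [N1 H1] _ [N2 H2]; exists (maxn N1 N2) => n hn /=.
  rewrite H1; last by apply: leq_trans hn; exact: leq_maxl.
  apply: H2; apply: leq_trans hn; exact: leq_maxr.
- move=> f g x a b _ [N1 H1] _ [N2 H2]; exists (maxn N1 N2) => n hn /=.
  rewrite H1; last by apply: leq_trans hn; exact: leq_maxl.
  by rewrite H2 //; apply: leq_trans hn; exact: leq_maxr.
- move=> f g n x y E _ [N H]; exists N => k hk /=; rewrite E /=; exact: H.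
- move=> f g n m x y z E _ [N1 H1] _ [N2 H2]; exists (maxn N1 N2) => k hk /=.
  rewrite E /=.
  have := H1 k; rewrite /= cpairK /= => ->; last by apply: leq_trans hk; exact: leq_maxl.
  apply: H2; apply: leq_trans hk; exact: leq_maxr.
- move=> f x n _ [N0 H0] Hlt.
  have [M HM] : exists M, forall k, M <= k -> forall i, i < n ->
      exists y, bev k f (cpair i x) = Some y.+1.
    elim: n Hlt {H0} => [|n IH] Hlt; first by exists 0.
    have [M1 HM1] : exists M, forall k, M <= k -> forall i, i < n ->
      exists y, bev k f (cpair i x) = Some y.+1.
      by apply: IH => i hi; apply: Hlt; exact: ltnW.
    have [y [_ [M2 HM2]]] := Hlt n (ltnSn n).
    exists (maxn M1 M2) => k hk i; rewrite ltnS leq_eqVlt => /orP [/eqP -> | hi].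
      by exists y; apply: HM2; apply: leq_trans hk; exact: leq_maxr.
    apply: HM1 => //; apply: leq_trans hk; exact: leq_maxl.
  exists (maxn (maxn M N0) n.+1) => k hk /=.
  have hM : M <= k by apply: leq_trans hk; apply: leq_trans (leq_maxl _ _); exact: leq_maxl.
  have hN : N0 <= k by apply: leq_trans hk; apply: leq_trans (leq_maxl _ _); exact: leq_maxr.
  have hn : n < k by apply: leq_trans hk; exact: leq_maxr.
  have Z : muloop (fun i => bev k f (cpair i x)) n = 0 by apply: muloop_zero; exact: HM.
  have S : muloop (fun i => bev k f (cpair i x)) n.+1 = n.+2 by rewrite /= Z H0.
  have St := @muloop_stable (fun i => bev k f (cpair i x)) n.+1 (k - n.+1).
  rewrite subnKC // S in St; by rewrite St.
Qed.

Lemma evalR_det p x y1 y2 : evalR p x y1 -> evalR p x y2 -> y1 = y2.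
Proof.
move=> /bev_complete [N1 H1] /bev_complete [N2 H2].
have := H1 (maxn N1 N2) (leq_maxl _ _); rewrite H2 ?leq_maxr //; by case.
Qed.

Definition computes p (f : nat -> nat) := forall x, evalR p x (f x).
Definition u1 z := (unpair z).1.
Definition u2 z := (unpair z).2.
Lemma u1c a b : u1 (cpair a b) = a. Proof. exact: cpairK1. Qed.
Lemma u2c a b : u2 (cpair a b) = b. Proof. exact: cpairK2. Qed.
Ltac simpc := do 6 (rewrite ?u1c ?u2c /=).

Fixpoint prec (f g : nat -> nat) (m x : nat) : nat :=
  if m is k.+1 then g (cpair k (cpair (prec f g k x) x)) else f x.

Lemma cExt p f g : computes p f -> (forall z, f z = g z) -> computes p g.
Proof. by move=> H E x; rewrite -E. Qed.
Lemma cZero : computes PZero (fun _ => 0). Proof. move=> x; constructor. Qed.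
Lemma cSucc : computes PSucc (fun z => z.+1). Proof. move=> x; constructor. Qed.
Lemma cId : computes PId (fun z => z). Proof. move=> x; constructor. Qed.
Lemma cFst : computes PFst u1. Proof. move=> x; constructor. Qed.
Lemma cSnd : computes PSnd u2. Proof. move=> x; constructor. Qed.
Lemma cComp p q f g : computes p f -> computes q g -> computes (PComp p q) (fun z => f (g z)).
Proof. move=> Hp Hq x; exact: ev_comp (Hq x) (Hp _). Qed.
Lemma cPair p q f g : computes p f -> computes q g ->
  computes (PPair p q) (fun z => cpair (f z) (g z)).
Proof. move=> Hp Hq x; exact: ev_pair (Hp x) (Hq x). Qed.
Lemma cRec p q f g : computes p f -> computes q g ->
  computes (PRec p q) (fun z => prec f g (u1 z) (u2 z)).
Proof.
move=> Hp Hq z.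
have : unpair z = (u1 z, u2 z) by rewrite /u1 /u2; case: (unpair z).
move: (u1 z) (u2 z) => m x; elim: m z => [|m IH] z E /=.
  exact: ev_rec0 E (Hp x).
apply: ev_recS E (IH _ (cpairK m x)) (Hq _).
Qed.

Fixpoint constP c := if c is c'.+1 then PComp PSucc (constP c') else PZero.
Lemma cConst c : computes (constP c) (fun _ => c).
Proof. elim: c => [|c IH] x /=; [constructor | exact: ev_comp (IH x) (ev_succ _)]. Qed.

Definition P12 := PComp PFst PSnd.
Definition P22 := PComp PSnd PSnd.
Lemma cP12 : computes P12 (fun z => u1 (u2 z)). Proof. exact: cComp cFst cSnd. Qed.
Lemma cP22 : computes P22 (fun z => u2 (u2 z)). Proof. exact: cComp cSnd cSnd. Qed.

Definition PRED := PComp (PRec PZero PFst) (PPair PId PZero).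
Lemma cPRED : computes PRED predn.
Proof.
apply: cExt (cComp (cRec cZero cFst) (cPair cId cZero)) _ => z.
rewrite u1c u2c; case: z => //= z; by rewrite u1c.
Qed.

Definition ADD := PRec PId (PComp PSucc P12).
Lemma cADD : computes ADD (fun z => u1 z + u2 z).
Proof.
apply: cExt (cRec cId (cComp cSucc cP12)) _ => z.
elim: (u1 z) => //= m ->; by rewrite u2c u1c.
Qed.

Definition MUL := PRec PZero (PComp ADD (PPair P12 P22)).
Lemma cMUL : computes MUL (fun z => u1 z * u2 z).
Proof.
apply: cExt (cRec cZero (cComp cADD (cPair cP12 cP22))) _ => z.
elim: (u1 z) => //= m IH; rewrite !u2c !u1c IH mulSn. lia.
Qed.

Definition RSUB := PRec PId (PComp PRED P12).
Lemma cRSUB : computes RSUB (fun z => u2 z - u1 z).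
Proof.
apply: cExt (cRec cId (cComp cPRED cP12)) _ => z.
elim: (u1 z) => //= [|m IH]; first by rewrite subn0.
by rewrite u2c u1c IH subnS.
Qed.

Definition IFZ := PRec PFst (PComp PSnd P22).
Lemma cIFZ : computes IFZ (fun z => if u1 z is 0 then u1 (u2 z) else u2 (u2 z)).
Proof.
apply: cExt (cRec cFst (cComp cSnd cP22)) _ => z.
by case: (u1 z) => //= m; rewrite !u2c.
Qed.

Definition op2 O A B := PComp O (PPair A B).
Definition addQ A B := op2 ADD A B.
Definition mulQ A B := op2 MUL A B.
Definition subQ A B := op2 RSUB B A.
Definition ifz C A B := PComp IFZ (PPair C (PPair A B)).
Definition predP A := PComp PRED A.

Lemma c_add A B a b : computes A a -> computes B b -> computes (addQ A B) (fun z => a z + b z).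
Proof. move=> HA HB; apply: cExt (cComp cADD (cPair HA HB)) _ => z; by rewrite u1c u2c. Qed.
Lemma c_mul A B a b : computes A a -> computes B b -> computes (mulQ A B) (fun z => a z * b z).
Proof. move=> HA HB; apply: cExt (cComp cMUL (cPair HA HB)) _ => z; by rewrite u1c u2c. Qed.
Lemma c_sub A B a b : computes A a -> computes B b -> computes (subQ A B) (fun z => a z - b z).
Proof. move=> HA HB; apply: cExt (cComp cRSUB (cPair HB HA)) _ => z; by rewrite u1c u2c. Qed.
Lemma c_ifz C A B c a b : computes C c -> computes A a -> computes B b ->
  computes (ifz C A B) (fun z => if c z is 0 then a z else b z).
Proof.
move=> HC HA HB; apply: cExt (cComp cIFZ (cPair HC (cPair HA HB))) _ => z.
simpc; by case: (c z).
Qed.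
Lemma c_pred A a : computes A a -> computes (predP A) (fun z => (a z).-1).
Proof. move=> HA; exact: cComp cPRED HA. Qed.

Ltac build := first
  [ match goal with H : computes ?p _ |- computes ?p _ => exact: H end
  | apply: cConst | apply: cP12 | apply: cP22
  | apply: c_add; build | apply: c_mul; build | apply: c_sub; build
  | apply: c_ifz; build | apply: c_pred; build
  | apply: cZero | apply: cSucc | apply: cId | apply: cFst | apply: cSnd
  | apply: cComp; build | apply: cPair; build | apply: cRec; build ].

Ltac solvec := eapply cExt; [build | move=> z; simpc].

Definition oenc (o : option nat) := if o is Some v then v.+1 else 0.

Fixpoint Cl (p : prog) : prog :=
  match p with
  | PZero => constP 1
  | PSucc => PComp PSucc (PComp PSucc PSnd)
  | PId => PComp PSucc PSnd
  | PFst => PComp PSucc (PComp PFst PSnd)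
  | PSnd => PComp PSucc P22
  | PComp f g => ifz (Cl g) (constP 0) (PComp (Cl f) (PPair PFst (predP (Cl g))))
  | PPair f g => ifz (Cl f) (constP 0) (ifz (Cl g) (constP 0)
                   (PComp PSucc (PPair (predP (Cl f)) (predP (Cl g)))))
  | PRec f g =>
      PComp (PRec (Cl f)
               (ifz P12 (constP 0)
                  (PComp (Cl g) (PPair (PComp PFst P22)
                                  (PPair PFst (PPair (predP P12) (PComp PSnd P22)))))))
            (PPair (PComp PFst PSnd) (PPair PFst (PComp PSnd PSnd)))
  | PMu f =>
      let R := PComp (Cl f) (PPair (PComp PFst P22) (PPair PFst (PComp PSnd P22))) in
      let acc := PComp (PRec PZero (ifz P12 (ifz R (constP 1)
                    (ifz (predP R) (PComp PSucc (PComp PSucc PFst)) (constP 0))) P12))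
                 (PPair PFst (PPair PFst PSnd)) in
      ifz acc (constP 0) (ifz (predP acc) (constP 0) (predP acc))
  end.

Lemma mu_loop_eq n x f (G : nat -> nat) :
  (forall k a, G (cpair k (cpair a (cpair n x))) =
     if a is 0 then (match bev n f (cpair k x) with None => 1 | Some 0 => k.+2 | Some _ => 0 end)
     else a) ->
  forall k, prec (fun _ => 0) G k (cpair n x) = muloop (fun i => bev n f (cpair i x)) k.
Proof.
move=> HG; elim=> [|k IH] //=; rewrite HG IH.
by case: (muloop _ k).
Qed.

Lemma ClP p : computes (Cl p) (fun z => oenc (bev (u1 z) p (u2 z))).
Proof.
elim: p => [||||| f IHf g IHg | f IHf g IHg | f IHf g IHg | f IHf] /=.
- by solvec.
- by solvec.
- by solvec.
- by solvec.
- by solvec.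
- solvec; case: (bev _ g _) => //= y; by rewrite u1c u2c.
- solvec; case: (bev _ f _) => //= a; case: (bev _ g _) => //=.
- solvec; move: (u2 z) (u1 z) => x n; rewrite -/(u1 x) -/(u2 x).
  elim: (u1 x) => [|m IH] /=; first by simpc.
  simpc; rewrite IH; case: (recl _ _ m _) => //= y; by simpc.
- solvec; move: (u2 z) (u1 z) => x n.
  rewrite (@mu_loop_eq n x f); last first.
    move=> k a; simpc; case: a => // ; case: (bev n f _) => //= [[|y]] //.
  rewrite /mures; by case: (muloop _ n) => [|[|a]].
Qed.

Lemma pickle_pair (T1 T2 : countType) (x : T1) (y : T2) :
  pickle (x, y) = CodeSeq.code [:: pickle x; pickle y].
Proof. by []. Qed.
Lemma pickle_seqE (T : countType) (s : seq T) : pickle s = CodeSeq.code (map pickle s).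
Proof. by []. Qed.
Lemma pickle_natE (n : nat) : pickle n = n.
Proof. by []. Qed.
Lemma pickle_inst (I : instance) : pickle I = pickle (inst_to I).
Proof. by []. Qed.

Definition c2 a b := 2 ^ a * (2 * 2 ^ b + 1).
Lemma code2 a b : CodeSeq.code [:: a; b] = c2 a b.
Proof. rewrite /CodeSeq.code /= /c2 -!muln2; lia. Qed.

Definition ranksJ := [:: 0; 1].
Definition memJ := PComp PSucc PZero.
Definition addJ := addQ PFst (subQ PSnd PFst).
Definition e1J : seq nat * nat * nat * nat := ([::], 0, 0, 1).
Definition transJ t : seq (seq nat * nat * nat * nat) :=
  [:: e1J; ([:: 0], 1, 0, (cpair t 1).+2)].
Definition finJ := [:: 1].
Definition JJ K t := Inst ranksJ memJ addJ K 0 1 1 (transJ t) finJ.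

Definition cR := pickle ranksJ.
Arguments cR : simpl never.
Definition cM := pickle memJ.
Arguments cM : simpl never.
Definition cA := pickle addJ.
Arguments cA : simpl never.
Definition cE1 := pickle e1J.
Arguments cE1 : simpl never.
Definition cQ0 := pickle [:: 0].
Arguments cQ0 : simpl never.
Definition cF := pickle finJ.
Arguments cF : simpl never.

Definition E_def t := c2 (c2 (c2 (c2 (c2 (c2 (c2 (c2 cR cM) cA) t) 0) 1) 1)
   (c2 cE1 (c2 (c2 (c2 cQ0 1) 0) (cpair t 1).+2))) cF.

Lemma map2 (A B : Type) (f : A -> B) a b : map f [:: a; b] = [:: f a; f b].
Proof. by []. Qed.
Notation cc a b := (CodeSeq.code [:: a; b]).
Lemma pickle_Inst r m a k z o n tr f :
  pickle (Inst r m a k z o n tr f) =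
  cc (cc (cc (cc (cc (cc (cc (cc (pickle r) (pickle m)) (pickle a)) (pickle k)) z) o) n)
     (pickle tr)) (pickle f).
Proof.
rewrite pickle_inst.
change (inst_to (Inst r m a k z o n tr f)) with ((((((((r, m), a), k), z), o), n), tr), f).
by rewrite !pickle_pair !pickle_natE.
Qed.

Lemma pickle_tr (e1 e2 : seq nat * nat * nat * nat) :
  pickle [:: e1; e2] = cc (pickle e1) (pickle e2).
Proof. by []. Qed.

Lemma pickle_e (qs : seq nat) (s q w : nat) :
  pickle (qs, s, q, w) = cc (cc (cc (pickle qs) s) q) w.
Proof. by rewrite !pickle_pair !pickle_natE. Qed.

Lemma pickleJ0 K t : pickle (JJ K t) = cc (cc (cc (cc (cc (cc (cc (cc (pickle ranksJ) (pickle memJ))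
   (pickle addJ)) (pickle K)) 0) 1) 1)
   (cc (pickle e1J) (cc (cc (cc (pickle [:: 0]) 1) 0) (cpair t 1).+2))) (pickle finJ).
Proof.
by rewrite /JJ pickle_Inst /transJ pickle_tr pickle_e.
Qed.

Lemma pickle_Inst2 r m a k z o n tr f :
  pickle (Inst r m a k z o n tr f) =
  c2 (c2 (c2 (c2 (c2 (c2 (c2 (c2 (pickle r) (pickle m)) (pickle a)) (pickle k)) z) o) n)
     (pickle tr)) (pickle f).
Proof. by rewrite pickle_Inst !code2. Qed.
Lemma pickle_tr2 (e1 e2 : seq nat * nat * nat * nat) :
  pickle [:: e1; e2] = c2 (pickle e1) (pickle e2).
Proof. by rewrite pickle_tr code2. Qed.
Lemma pickle_e2 (qs : seq nat) (s q w : nat) :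
  pickle (qs, s, q, w) = c2 (c2 (c2 (pickle qs) s) q) w.
Proof. by rewrite pickle_e !code2. Qed.

Lemma E_ex : {E : nat -> nat | forall t, E t = E_def t}.
Proof. by exists E_def. Qed.
Definition E := proj1_sig E_ex.
Lemma EE t : E t = E_def t. Proof. exact: (proj2_sig E_ex). Qed.
Arguments c2 : simpl never.
Lemma pickleJ K : pickle (JJ K (pickle K)) = E (pickle K).
Proof.
rewrite /JJ pickle_Inst2 /transJ pickle_tr2 pickle_e2.
rewrite EE.
by [].
Qed.

Arguments constP : simpl never.

Definition POW2 := PComp (PRec (constP 1) (mulQ (constP 2) P12)) (PPair PId PZero).
Lemma cPOW2 : computes POW2 (fun z => 2 ^ z).
Proof.
solvec; elim: z => //= z IH; simpc; by rewrite IH expnS.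
Qed.

Definition C2P A B := mulQ (PComp POW2 A) (addQ (mulQ (constP 2) (PComp POW2 B)) (constP 1)).
Lemma c_C2P A B a b : computes A a -> computes B b -> computes (C2P A B) (fun z => c2 (a z) (b z)).
Proof. move=> HA HB; apply: cExt (c_mul (cComp cPOW2 HA) (c_add (c_mul (cConst 2) (cComp cPOW2 HB)) (cConst 1))) _ => z //. Qed.

Ltac build3 := first
  [ match goal with H : computes ?p _ |- computes ?p _ => exact: H end
  | apply: cConst | apply: cP12 | apply: cP22
  | apply: c_C2P; build3
  | apply: c_add; build3 | apply: c_mul; build3 | apply: c_sub; build3
  | apply: c_ifz; build3 | apply: c_pred; build3
  | apply: cZero | apply: cSucc | apply: cId | apply: cFst | apply: cSnd
  | apply: cComp; build3 | apply: cPair; build3 | apply: cRec; build3 ].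
Ltac solvec3 := eapply cExt; [build3 | move=> z; simpc].

Definition EP := C2P (C2P (C2P (C2P (C2P (C2P (C2P (C2P (constP cR) (constP cM)) (constP cA)) PId)
   (constP 0)) (constP 1)) (constP 1))
   (C2P (constP cE1) (C2P (C2P (C2P (constP cQ0) (constP 1)) (constP 0))
      (PComp PSucc (PComp PSucc (PPair PId (constP 1))))))) (constP cF).
Lemma cEP : computes EP E.
Proof. eapply cExt; [build3 | move=> z; by rewrite EE]. Qed.


Section Main.
Variable d : prog.

Definition Pt t T := bev T d (E t) == Some 0.
Fixpoint capf t s := if s is s'.+1 then (if Pt t (capf t s') then capf t s' else s'.+1) else 0.

Definition mulf x y := match x, y with
 | 0, _ => 0 | _, 0 => 0 | 1, _ => y | _, 1 => x
 | p.+2, q.+2 => if u1 p == u1 q then (cpair (u1 p) (capf (u1 p) (u2 p + u2 q))).+2 else 0 end.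

Definition CAPP :=
  let V := PComp (Cl d) (PPair P12 (PComp EP P22)) in
  PComp (PRec PZero (ifz (predP V) (ifz V (PComp PSucc PFst) P12) (PComp PSucc PFst)))
        (PPair PSnd PFst).

Lemma cCAPP : computes CAPP (fun z => capf (u1 z) (u2 z)).
Proof.
have HCl := ClP d; have HE := cEP.
solvec3; move: (u2 z) (u1 z) => s t.
elim: s => //= s IH; simpc; rewrite IH /Pt.
by case: (bev _ d _) => [[|v]|].
Qed.

Definition Kprog :=
  let pp := predP (predP PFst) in let qq := predP (predP PSnd) in
  let t1 := PComp PFst pp in let t2 := PComp PFst qq in
  let e1 := PComp PSnd pp in let e2 := PComp PSnd qq in
  let dist := addQ (subQ t1 t2) (subQ t2 t1) in
  let TAG := ifz dist (PComp PSucc (PComp PSucc (PPair t1 (PComp CAPP (PPair t1 (addQ e1 e2))))))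
                 (constP 0) in
  ifz PFst (constP 0) (ifz PSnd (constP 0) (ifz (predP PFst) PSnd (ifz (predP PSnd) PFst TAG))).

Lemma cK : computes Kprog (fun z => mulf (u1 z) (u2 z)).
Proof.
have HC := cCAPP.
solvec3; move: (u1 z) (u2 z) => x y.
case: x => [|[|x]] //; case: y => [|[|y]] //=.
rewrite /mulf; case: eqP => [->|ne]; first by rewrite subnn.
by have -> : (u1 x - u1 y) + (u1 y - u1 x) = (u1 x - u1 y + (u1 y - u1 x)).-1.+1 by lia.
Qed.

End Main.

Lemma opq_ex (x : nat) : {y | y = x}. Proof. by exists x. Qed.
Definition opq x := proj1_sig (opq_ex x).
Lemma opqE x : opq x = x. Proof. exact: proj2_sig (opq_ex x). Qed.

Section Sem.
Variable d : prog.

Lemma capf_char t s :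
  ((forall T, T <= s -> ~~ Pt d t T) /\ capf d t s = s) \/
  (capf d t s <= s /\ Pt d t (capf d t s) /\ forall T, T < capf d t s -> ~~ Pt d t T).
Proof.
elim: s => [|s IH] /=.
  case P0: (Pt d t 0); [right | left]; split=> //.
  by move=> T; rewrite leqn0 => /eqP ->; rewrite P0.
case: IH => [[HA EA] | [HB1 [HB2 HB3]]].
  rewrite EA; have -> : Pt d t s = false by apply/negbTE/HA.
  case Ps: (Pt d t s.+1).
    right; split=> //; split=> // T hT; apply: HA; by rewrite -ltnS.
  left; split=> // T; rewrite leq_eqVlt => /orP [/eqP -> | hT]; first by rewrite Ps.
  by apply: HA; rewrite -ltnS.
rewrite HB2; right; split; [exact: leqW | by split].
Qed.

Lemma capf_bound t m s : Pt d t m -> capf d t s <= m.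
Proof.
move=> Pm; case: (capf_char t s) => [[HA ->] | [_ [_ HB]]].
  case: (leqP m s) => [hms|hms]; [by move: (HA m hms); rewrite Pm | exact: ltnW].
case: (leqP (capf d t s) m) => [//|hlt]; by move: (HB m hlt); rewrite Pm.
Qed.

Lemma capf_none t s : (forall T, ~~ Pt d t T) -> capf d t s = s.
Proof.
move=> H; case: (capf_char t s) => [[_ ->] // | [_ [P _]]]; by move: (H (capf d t s)); rewrite P.
Qed.

Lemma capf_least t m s : Pt d t m -> (forall T, T < m -> ~~ Pt d t T) -> m <= s -> capf d t s = m.
Proof.
move=> Pm Hm hms; case: (capf_char t s) => [[HA _] | [_ [P HB]]].
  by move: (HA m hms); rewrite Pm.
apply/eqP; rewrite eqn_leq; apply/andP; split.
  case: (leqP (capf d t s) m) => [//|hlt]; by move: (HB m hlt); rewrite Pm.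
case: (leqP m (capf d t s)) => [//|hlt]; by move: (Hm _ hlt); rewrite P.
Qed.

Lemma capf_assoc t a b : capf d t (capf d t a + b) = capf d t (a + b).
Proof.
case: (capf_char t a) => [[_ ->] // | [Hle [P HB]]].
rewrite !(capf_least P HB) // ?leq_addr //; apply: leq_trans Hle _; exact: leq_addr.
Qed.

Lemma mulf1l x : mulf d 1 x = x. Proof. by case: x => [|[|x]]. Qed.
Lemma mulf1r x : mulf d x 1 = x. Proof. by case: x => [|[|x]]. Qed.
Lemma mulf0l x : mulf d 0 x = 0. Proof. by []. Qed.
Lemma mulf0r x : mulf d x 0 = 0. Proof. by case: x => [|[|x]]. Qed.

Lemma mulfT t e1 e2 : mulf d (cpair t e1).+2 (cpair t e2).+2 = (cpair t (capf d t (e1 + e2))).+2.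
Proof. by rewrite /mulf !u1c !u2c eqxx. Qed.

Lemma mulf_neq t1 t2 e1 e2 : t1 != t2 -> mulf d (cpair t1 e1).+2 (cpair t2 e2).+2 = 0.
Proof. by move=> H; rewrite /mulf !u1c (negbTE H). Qed.

Lemma mulfA x y z : mulf d x (mulf d y z) = mulf d (mulf d x y) z.
Proof.
case: x => [|[|x]]; first by rewrite !mulf0l.
  by rewrite !mulf1l.
case: y => [|[|y]]; first by rewrite !(mulf0l, mulf0r).
  by rewrite mulf1l mulf1r.
case: z => [|[|z]]; first by rewrite !(mulf0l, mulf0r).
  by rewrite !mulf1r.
rewrite -[x]unpairK -[y]unpairK -[z]unpairK -/(u1 x) -/(u2 x) -/(u1 y) -/(u2 y) -/(u1 z) -/(u2 z).
move: (u1 x) (u2 x) (u1 y) (u2 y) (u1 z) (u2 z) => tx ex ty ey tz ez.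
case: (tx =P ty) => [<- | nxy].
  case: (tx =P tz) => [<- | nxz].
    by rewrite !mulfT capf_assoc addnC capf_assoc addnC addnA.
  rewrite mulfT !(@mulf_neq tx tz) ?mulf0r //; exact/eqP.
rewrite (@mulf_neq tx ty) ?mulf0l; last exact/eqP.
case: (ty =P tz) => [<- | nyz].
  rewrite mulfT (@mulf_neq tx ty) //; exact/eqP.
rewrite (@mulf_neq ty tz) ?mulf0r //; exact/eqP.
Qed.

End Sem.

Arguments mulf : simpl never.

Section Inst.
Variable d : prog.

Definition KK := Kprog d.
Definition tK := opq (pickle KK).
Definition JI := JJ KK tK.
Definition wJ := (cpair tK 1).+2.

Lemma pickle_JI : pickle JI = E tK.
Proof. by rewrite /JI /tK opqE pickleJ. Qed.

Lemma addJ_ok : computes addJ (fun z => maxn (u1 z) (u2 z)).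
Proof. eapply cExt; [build3 | move=> z; simpc; by rewrite maxnE]. Qed.

Lemma validJ : valid_instance JI (fun _ => true) maxn (mulf d).
Proof.
rewrite /valid_instance.
split; first by [].
split; first by move=> n; exact: (ev_comp (ev_zero n) (ev_succ 0)).
split; first by move=> x y _ _; split=> //; have := addJ_ok (cpair x y); rewrite u1c u2c.
split; first by move=> x y _ _; split=> //; have := cK d (cpair x y); rewrite u1c u2c.
split; first by [].
split; first by [].
split; first by [].
split; first by move=> *; exact: maxnA.
split; first by move=> *; exact: maxnC.
split; first by move=> *; exact: maxn0.
split; first by move=> x y z _ _ _; exact: mulfA.
split; first by move=> x _; rewrite mulf1l mulf1r.
split; first by move=> x _; rewrite mulf0l mulf0r.
split; first by [].
split.
  move=> qs s q w; rewrite /= !inE => /orP [/eqP [-> -> -> _] | /eqP [-> -> -> _]] //.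
split; first by [].
split; first by [].
move=> qs s q q' hq hq' _ _; by case: q hq => [|q]; case: q' hq' => [|q'].
Qed.

Lemma deltaA0 : deltaA JI maxn (mulf d) 0 [::] = [:: 1].
Proof. by rewrite /deltaA /= mulf1l. Qed.

Lemma deltaA1 v : deltaA JI maxn (mulf d) 1 [:: v] = [:: mulf d (nth 0 v 0) wJ].
Proof. by rewrite /deltaA /= mulf1r maxn0. Qed.

Lemma carrier_shape v : nerode_carrier JI maxn (mulf d) v ->
  v = [:: 1] \/ exists e, v = [:: (cpair tK e).+2] /\ (e = 1 \/ exists s, e = capf d tK s).
Proof.
elim=> s vs Hs Hsz _ IH.
case: s Hs Hsz => [|[|s]] // _ Hsz.
  case: vs Hsz IH => // _ _; left; exact: deltaA0.
case: vs Hsz IH => [|v0 [|]] // _ IH; rewrite deltaA1.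
case: (IH v0 (mem_head _ _)) => [-> | [e [-> He]]].
  by right; exists 1; split; [rewrite /= mulf1l | left].
right; exists (capf d tK (e + 1)); split; first by rewrite /= /wJ mulfT.
by right; exists (e + 1).
Qed.

Lemma finite_case m : Pt d tK m -> nerode_finite JI maxn (mulf d).
Proof.
move=> Pm; exists ([:: 1] :: [seq [:: (cpair tK e).+2] | e <- iota 0 (maxn 1 m).+1]).
move=> v /carrier_shape [-> | [e [-> He]]]; first by rewrite mem_head.
rewrite in_cons; apply/orP; right; apply: (map_f (fun e => [:: (cpair tK e).+2])).
rewrite mem_iota /= add0n ltnS.
case: He => [-> | [s ->]]; first exact: leq_maxl.
apply: leq_trans (capf_bound s Pm) _; exact: leq_maxr.
Qed.

Lemma C1 : nerode_carrier JI maxn (mulf d) [:: 1].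
Proof. rewrite -deltaA0; by apply: NC_step. Qed.

Lemma inf_carrier : (forall T, ~~ Pt d tK T) ->
  forall k, nerode_carrier JI maxn (mulf d) [:: (cpair tK k.+1).+2].
Proof.
move=> H; elim=> [|k IH].
  have -> : [:: (cpair tK 1).+2] = deltaA JI maxn (mulf d) 1 [:: [:: 1]].
    by rewrite deltaA1 /= mulf1l.
  apply: NC_step => // v; rewrite inE => /eqP ->; exact: C1.
have -> : [:: (cpair tK k.+2).+2] = deltaA JI maxn (mulf d) 1 [:: [:: (cpair tK k.+1).+2]].
  by rewrite deltaA1 /= /wJ mulfT capf_none // addn1.
apply: NC_step => // v; rewrite inE => /eqP ->; exact: IH.
Qed.

Lemma not_finite : (forall T, ~~ Pt d tK T) -> ~ nerode_finite JI maxn (mulf d).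
Proof.
move=> H [l Hl].
set M := foldr maxn 0 (map (head 0) l).
have HM : forall v, v \in l -> head 0 v <= M.
  rewrite /M; elim: l {Hl M} => // a l IHl v; rewrite inE => /orP [/eqP -> | /IHl h] /=.
    exact: leq_maxl.
  apply: leq_trans h (leq_maxr _ _).
have := HM _ (Hl _ (inf_carrier H M)); rewrite /= cpairE => h.
have h2 : M.+1 <= M := leq_trans (leq_addl _ _) (leq_trans (leqnSn _) (leq_trans (leqnSn _) h)).
by rewrite ltnn in h2.
Qed.

End Inst.

Theorem theorem8p7 :
  ~ exists d : prog,
      forall (I : instance) (chi : nat -> bool) (add mul : nat -> nat -> nat),
        valid_instance I chi add mul ->
        exists b : bool, evalR d (pickle I) b /\ (b <-> nerode_finite I add mul).
Proof.
case=> d Hd.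
have [b [Hb Hiff]] := Hd _ _ _ _ (validJ d).
rewrite pickle_JI in Hb.
case: (Classical_Prop.classic (exists T, Pt d (tK d) T)) => [[T HT] | NT].
  have H0 : evalR d (E (tK d)) 0 by apply: (@bev_sound T); apply/eqP.
  have := evalR_det Hb H0; case: b Hb Hiff => // _ Hiff _.
  by have := Hiff.2 (finite_case HT).
have NT' : forall T, ~~ Pt d (tK d) T.
  by move=> T; apply/negP => P; apply: NT; exists T.
case: b Hb Hiff => Hb Hiff.
  by have := not_finite NT' (Hiff.1 is_true_true).
have [N HN] := bev_complete Hb.
apply: NT; exists N; by rewrite /Pt (HN N (leqnn N)).
Qed.
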